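(* Let ${\bf r}=(r_0,r_1,\dots)$ be a finitely supported sequence of nonnegative integers with $n=\sum_{d\ge1}r_d$, and let $k\ge0$ be an integer. For any two ${\bf S}^{(1)},{\bf S}^{(2)}\in V_{\bf r}$, $$|\mathcal{CF}_{{\bf r},k,{\bf S}^{(1)}}|=|\mathcal{CF}_{{\bf r},k,{\bf S}^{(2)}}|.$$
   Context: A plane tree is an unlabelled rooted tree in which the children of every vertex are linearly ordered; a plane forest is a finite linearly ordered sequence of plane trees. For vertices $u,v$ in a tree, $v$ is a descendant of $u$ if $u$ lies on the path from the root to $v$ (so $u$ is a descendant of itself). The degree $d_v$ is the number of children of $v$; $v$ is internal if $d_v\ge1$. $I(F)$ is the set of internal vertices of $F$. A plane forest has type ${\bf r}$ if it has exactly $r_i$ vertices of degree $i$ for all $i\ge0$. A labelled forest is a plane forest $F$ together with a bijection (labelling) $I(F)\to[n]$. An internal vertex $v$ of a labelled forest is proper if no internal descendant of $v$ has a smaller label than $v$, and improper otherwise. Fix colors $c_1,c_2,\dots$ and distinct special colors $c_1',c_2',\dots$. A proper $k$-coloring of a labelled forest assigns to each internal vertex $v$ a color, taken from $\{c_1,\dots,c_{d_v}\}$ if $v$ is proper and from $\{c_1,\dots,c_{d_v}\}\cup\{c_1',\dots,c_k'\}$ if $v$ is improper. A $k$-colored labelled forest is a labelled forest together with a proper $k$-coloring; $\mathcal{CF}_{{\bf r},k}$ is the set of $k$-colored labelled forests whose underlying plane forest has type ${\bf r}$. $V_{\bf r}$ is the set of sequences ${\bf S}=(S_1,S_2,\dots)$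 of pairwise disjoint subsets of $[n]$ with union $[n]$ and $|S_i|=r_i$ for all $i\ge1$. For ${\bf S}\in V_{\bf r}$, $\mathcal{CF}_{{\bf r},k,{\bf S}}$ is the set of forests in $\mathcal{CF}_{{\bf r},k}$ in which every internal vertex $v$ has its label in $S_{d_v}$. *)

(* Defs.v *)
From HB Require Import structures.
From mathcomp Require Import all_boot.
From mathcomp Require Import classical_sets cardinality.
Set Implicit Arguments. Unset Strict Implicit. Unset Printing Implicit Defensive.

Inductive dtree (A : Type) : Type := DNode of A & seq (dtree A).
Arguments DNode {A}.

(* Colors: Col i is c_i, Spc j is the special color c'_j (i, j >= 1). *)
Inductive color : Type := Col of nat | Spc of nat.

Definition color2sum (c : color) : nat + nat :=
  match c with Col i => inl i | Spc j => inr j end.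
Definition sum2color (s : nat + nat) : color :=
  match s with inl i => Col i | inr j => Spc j end.
Lemma color2sumK : cancel color2sum sum2color. Proof. by case. Qed.
HB.instance Definition _ := Equality.copy color (can_type color2sumK).

(* A vertex of a k-colored labelled forest carries [Some (label, color)]   *)
(* if it is internal, and [None] if it is a leaf.                         *)
Definition deco := option (nat * color).
Definition ctree := dtree deco.
Definition cforest := seq ctree.

Fixpoint labels (t : ctree) : seq nat :=
  let: DNode a ch := t in
  (if a is Some (l, _) then [:: l] else [::]) ++ flatten (map labels ch).

(* one record per vertex v : (decoration of v, degree d_v,
   labels of the internal descendants of v (v included)) *)
Fixpoint vinfo (t : ctree) : seq (deco * nat * seq nat) :=
  let: DNode a ch := t in
  (a, size ch, labels t) :: flatten (map vinfo ch).

Definition fverts (F : cforest) := flatten (map vinfo F).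
Definition flabels (F : cforest) := flatten (map labels F).

(* n = sum_{d >= 1} r_d ; r is encoded as a (finitely supported) seq nat,
   r_i = nth 0 r i *)
Definition nint (r : seq nat) : nat := sumn (behead r).

(* v is proper : no internal descendant has a smaller label *)
Definition proper_info (l : nat) (L : seq nat) : bool := all (fun m => l <= m) L.

Definition vertex_ok (k : nat) (S : nat -> pred nat) (v : deco * nat * seq nat) : Prop :=
  let: (a, d, L) := v in
  match a with
  | None => d = 0
  | Some (l, c) =>
      0 < d /\
      (match c with
       | Col i => 1 <= i <= d
       | Spc j => ~~ proper_info l L /\ 1 <= j <= k
       end) /\
      S d l
  end.

Definition CF (r : seq nat) (k : nat) (S : nat -> pred nat) (F : cforest) : Prop :=
  (forall i, count (fun v : deco * nat * seq nat => v.1.2 == i) (fverts F) = nth 0 r i) /\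
  perm_eq (flabels F) (iota 1 (nint r)) /\
  (forall v, v \in fverts F -> vertex_ok k S v).

(* V_r : S = (S_1, S_2, ...) pairwise disjoint subsets of [n], union [n],
   |S_i| = r_i for i >= 1  (S 0 is irrelevant) *)
Definition inV (r : seq nat) (S : nat -> pred nat) : Prop :=
  (forall i j x, 1 <= i -> 1 <= j -> i != j -> ~~ (S i x && S j x)) /\
  (forall x, (exists2 i, 1 <= i & S i x) <-> 1 <= x <= nint r) /\
  (forall i, 1 <= i -> count (S i) (iota 1 (nint r)) = nth 0 r i).

(* Main.v *)
Require Import Defs.
From mathcomp Require Import all_boot.
From mathcomp Require Import zify.
From mathcomp Require Import boolp classical_sets functions cardinality.
Set Implicit Arguments. Unset Strict Implicit. Unset Printing Implicit Defensive.

Fixpoint tin {A : Type} (t : A) (ch : seq A) : Prop :=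
  match ch with [::] => False | c :: cs => c = t \/ tin t cs end.

Section TreeInd.
Variable A : Type.
Variable P : dtree A -> Prop.
Hypothesis HP : forall a ch, (forall t, tin t ch -> P t) -> P (DNode a ch).
Fixpoint dtree_ind2 (t : dtree A) : P t :=
  match t return P t with DNode a ch => @HP a ch
    ((fix go (ch : seq (dtree A)) : forall t, tin t ch -> P t :=
       match ch return forall t, tin t ch -> P t with
       | [::] => fun t F => match F return P t with end
       | c :: cs => fun t Hin => match Hin return P t with
                   | or_introl E => eq_ind c P (dtree_ind2 c) t E
                   | or_intror Hin' => go cs t Hin' end
       end) ch) end.
End TreeInd.

Inductive ctx := Hole | Ctx of deco & seq ctree & ctx & seq ctree.
Fixpoint plug (C : ctx) (t : ctree) : ctree :=
  match C with Hole => t | Ctx d l C' r => DNode d (l ++ plug C' t :: r) end.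
Definition own (d : deco) : seq nat := if d is Some (l, _) then [:: l] else [::].
Fixpoint ctxlabels C := match C with Hole => [::]
  | Ctx d l C' r => own d ++ flabels l ++ flabels r ++ ctxlabels C' end.
Definition dof (t : ctree) := let: DNode d _ := t in d.
Definition chof (t : ctree) := let: DNode _ ch := t in ch.
Definition info (t : ctree) := (dof t, size (chof t), labels t).
Fixpoint pathinfo C t := match C with Hole => [::]
  | Ctx d l C' r => (d, size l + (size r).+1, labels (plug C t)) :: pathinfo C' t end.
Fixpoint sideinfo C := match C with Hole => [::]
  | Ctx d l C' r => fverts l ++ fverts r ++ sideinfo C' end.

Lemma labels_node d ch : labels (DNode d ch) = own d ++ flabels ch.
Proof. by case: d => [[]|]. Qed.
Lemma vinfo_node d ch : vinfo (DNode d ch) = info (DNode d ch) :: fverts ch.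
Proof. by []. Qed.
Lemma flabels_cat s1 s2 : flabels (s1 ++ s2) = flabels s1 ++ flabels s2.
Proof. by rewrite /flabels map_cat flatten_cat. Qed.
Lemma fverts_cat s1 s2 : fverts (s1 ++ s2) = fverts s1 ++ fverts s2.
Proof. by rewrite /fverts map_cat flatten_cat. Qed.
Lemma flabels_cons t s : flabels (t :: s) = labels t ++ flabels s.
Proof. by []. Qed.
Lemma fverts_cons t s : fverts (t :: s) = vinfo t ++ fverts s.
Proof. by []. Qed.

Lemma labels_plug C t : perm_eq (labels (plug C t)) (ctxlabels C ++ labels t).
Proof.
elim: C => [|d l C IH r] //.
rewrite [plug _ _]/= labels_node [ctxlabels _]/= flabels_cat flabels_cons.
rewrite -catA -catA !perm_cat2l perm_catC -catA perm_cat2l. exact: IH.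
Qed.

Lemma vinfo_plug C t : perm_eq (vinfo (plug C t)) (pathinfo C t ++ sideinfo C ++ vinfo t).
Proof.
elim: C => [|d l C IH r] //.
rewrite [plug _ _]/= vinfo_node [pathinfo _ _]/= [sideinfo _]/= fverts_cat fverts_cons.
rewrite /info /= size_cat /= perm_cons.
apply/permP => p; move/permP: IH => /(_ p); rewrite !count_cat => ->; lia.
Qed.

Lemma split_fverts (ch : seq ctree) v : v \in fverts ch ->
  exists l c r, [/\ ch = l ++ c :: r, v \in vinfo c & tin c ch].
Proof.
elim: ch => //= c cs IH; rewrite fverts_cons mem_cat => /orP[H|/IH[l [c' [r [-> H1 H2]]]]].
  by exists [::], c, cs; split; rewrite //=; left.
by exists (c :: l), c', r; split => //=; right.
Qed.

Lemma split_flabels (ch : seq ctree) x : x \in flabels ch ->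
  exists l c r, [/\ ch = l ++ c :: r, x \in labels c & tin c ch].
Proof.
elim: ch => //= c cs IH; rewrite flabels_cons mem_cat => /orP[H|/IH[l [c' [r [-> H1 H2]]]]].
  by exists [::], c, cs; split; rewrite //=; left.
by exists (c :: l), c', r; split => //=; right.
Qed.

Lemma vinfo_dec t v : v \in vinfo t -> exists C u, t = plug C u /\ v = info u.
Proof.
elim/dtree_ind2: t => d ch IH; rewrite vinfo_node in_cons => /orP[/eqP->|].
  by exists Hole, (DNode d ch).
case/split_fverts => l [c [r [E Hv Ht]]].
have [C [u [Ec ->]]] := IH c Ht Hv.
by exists (Ctx d l C r), u; rewrite E Ec.
Qed.

Lemma fverts_dec F v : v \in fverts F ->
  exists pre C u post, F = pre ++ plug C u :: post /\ v = info u.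
Proof.
case/split_fverts => l [c [r [-> Hv _]]].
have [C [u [-> ->]]] := vinfo_dec Hv.
by exists l, C, u, r.
Qed.

Lemma labels_dec t x : x \in labels t -> exists C c ch, t = plug C (DNode (Some (x, c)) ch).
Proof.
elim/dtree_ind2: t => d ch IH; rewrite labels_node mem_cat => /orP[|].
  by case: d => [[m c]|] //; rewrite /own inE => /eqP->; exists Hole, c, ch.
case/split_flabels => l [c [r [E Hv Ht]]].
have [C [c' [ch' Ec]]] := IH c Ht Hv.
by exists (Ctx d l C r), c', ch'; rewrite E Ec.
Qed.

Lemma flabels_dec F x : x \in flabels F ->
  exists pre C c ch post, F = pre ++ plug C (DNode (Some (x, c)) ch) :: post.
Proof.
case/split_flabels => l [t [r [-> Hv _]]].
have [C [c [ch ->]]] := labels_dec Hv.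
by exists l, C, c, ch, r.
Qed.

Lemma pathinfo_fst C t t' : map fst (pathinfo C t) = map fst (pathinfo C t').
Proof. by elim: C => //= d l C ->. Qed.

Lemma pathinfo_sub C t v : v \in pathinfo C t -> {subset labels t <= v.2}.
Proof.
elim: C => //= d l C IH r; rewrite in_cons => /orP[/eqP-> x Hx|/IH//].
by rewrite /= (perm_mem (labels_plug (Ctx d l C r) t)) mem_cat Hx orbT.
Qed.

Lemma pathinfo_own C t v : v \in pathinfo C t -> {subset own v.1.1 <= ctxlabels C}.
Proof.
elim: C => //= d l C IH r; rewrite in_cons => /orP[/eqP-> x Hx|/IH H x Hx].
  by rewrite /= mem_cat Hx.
by rewrite !mem_cat (H x Hx) !orbT.
Qed.

Lemma pathinfo_perm C t t' v' : v' \in pathinfo C t' ->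
  exists2 v, v \in pathinfo C t &
    v.1 = v'.1 /\ (perm_eq (labels t) (labels t') -> perm_eq v.2 v'.2).
Proof.
elim: C => //= d l C IH r; rewrite in_cons => /orP[/eqP->|/IH[v Hv H]].
  exists (d, size l + (size r).+1, labels (plug (Ctx d l C r) t)); first by rewrite mem_head.
  split; first by []. move=> Hp.
  have h1 := labels_plug (Ctx d l C r) t; have h2 := labels_plug (Ctx d l C r) t'.
  rewrite perm_sym in h2; apply: perm_trans h1 _; apply: perm_trans _ h2; by rewrite perm_cat2l.
by exists v => //; rewrite in_cons Hv orbT.
Qed.

Lemma fverts_label F v x c : v \in fverts F -> v.1.1 = Some (x, c) -> x \in flabels F.
Proof.
case/fverts_dec => pre [C [u [post [-> ->]]]] /=.
case: u => d ch /= Ed; rewrite flabels_cat flabels_cons !mem_cat.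
by rewrite (perm_mem (labels_plug C _)) mem_cat labels_node Ed mem_cat /= mem_head !orbT.
Qed.

Section Ops.
Variable a : nat.

Definition tau x := if x == a then a.+1 else if x == a.+1 then a else x.
Lemma tauK : involutive tau.
Proof. move=> x; rewrite /tau; case: (eqVneq x a) => [->|h1]; first by rewrite eqxx (gtn_eqF (ltnSn a)).
case: (eqVneq x a.+1) => [->|h2]; first by rewrite eqxx.
by rewrite (negPf h1) (negPf h2).
Qed.

Definition swapd (d : deco) : deco := if d is Some (l, c) then Some (tau l, c) else None.
Fixpoint swapT (t : ctree) : ctree := let: DNode d ch := t in DNode (swapd d) (map swapT ch).
Definition swapI (v : deco * nat * seq nat) := let: (d, n, L) := v in (swapd d, n, map tau L).

Lemma own_swap d : own (swapd d) = map tau (own d).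
Proof. by case: d => [[]|]. Qed.

Lemma labels_swap t : labels (swapT t) = map tau (labels t).
Proof.
elim/dtree_ind2: t => d ch IH; rewrite [swapT _]/= !labels_node own_swap map_cat; congr (_ ++ _).
elim: ch IH => //= c cs IHc IH.
rewrite flabels_cons (IH c) ?IHc //=; [|by move=> t Ht; apply: IH; right|by left].
by rewrite -map_cat.
Qed.

Lemma vinfo_swap t : vinfo (swapT t) = map swapI (vinfo t).
Proof.
elim/dtree_ind2: t => d ch IH; rewrite [swapT _]/= !vinfo_node.
have -> : info (DNode (swapd d) (map swapT ch)) = swapI (info (DNode d ch)).
  by rewrite /info /= size_map -(labels_swap (DNode d ch)).
rewrite map_cons; congr (_ :: _).
elim: ch IH => //= c cs IHc IH.
rewrite fverts_cons (IH c) ?IHc //=; [|by move=> t Ht; apply: IH; right|by left].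
by rewrite -map_cat.
Qed.

Definition islab (x : nat) (d : deco) := if d is Some (m, _) then m == x else false.
Lemma islabE x d : islab x d = (x \in own d).
Proof. by case: d => [[m c]|] //=; rewrite inE eq_sym. Qed.

Fixpoint findy (t : ctree) : option (deco * seq ctree) := let: DNode d ch := t in
  if islab a d then Some (d, ch) else
  foldr (fun c acc => if findy c is Some r then Some r else acc) None ch.

Fixpoint repl (w : ctree) (t : ctree) : ctree := let: DNode d ch := t in
  if islab a d then w else DNode d (map (repl w) ch).

Definition condV (v : deco * nat * seq nat) := let: (d, _, L) := v in
  [&& (if d is Some (l, Spc _) then l == a.+1 else false), a \in L & all (fun m => a <= m) L].

Definition leaf : ctree := DNode None [::].

Definition surgX (t : ctree) : ctree := let: DNode d xs := t in
  let q := find (fun u => a \in labels u) xs in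
  let G := nth leaf xs q in
  match findy G with
  | Some (Some (_, Col c), ys) =>
     DNode d (set_nth leaf ys c.-1
       (repl (DNode (Some (a, Col q.+1)) (set_nth leaf xs q (nth leaf ys c.-1))) G))
  | _ => t end.

Fixpoint surgT (t : ctree) : ctree := let: DNode d ch := t in
  if condV (info (DNode d ch)) then surgX (DNode d ch) else DNode d (map surgT ch).

Definition Phi (F : cforest) : cforest :=
  if has condV (fverts F) then map surgT F else map swapT F.

Lemma notin_flabels_cons t s x : x \notin flabels (t :: s) -> x \notin labels t /\ x \notin flabels s.
Proof. by rewrite flabels_cons mem_cat negb_or => /andP. Qed.

Lemma findy_nil t : a \notin labels t -> findy t = None.
Proof.
elim/dtree_ind2: t => d ch IH; rewrite labels_node mem_cat negb_or => /andP[H1 H2] /=.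
rewrite islabE (negPf H1).
elim: ch IH H2 => //= c cs IHc IH /notin_flabels_cons [h1 h2].
rewrite (IH c) //; [|by left]. by apply: IHc => // t Ht; apply: IH; right.
Qed.

Lemma findy_plug C t : a \notin ctxlabels C -> findy (plug C t) = findy t.
Proof.
elim: C => //= d l C IH r; rewrite !mem_cat !negb_or => /and4P[h1 h2 h3 h4].
rewrite islabE (negPf h1) foldr_cat.
have -> : forall z, foldr (fun c acc => if findy c is Some r then Some r else acc) z l = z.
  elim: l h2 => //= c cs IHc /notin_flabels_cons [h5 h6] z; by rewrite findy_nil // IHc.
rewrite /= IH //; case: (findy t) => // .
elim: r h3 => //= c cs IHc /notin_flabels_cons [h5 h6]; by rewrite findy_nil // IHc.
Qed.

Lemma repl_nil w t : a \notin labels t -> repl w t = t.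
Proof.
elim/dtree_ind2: t => d ch IH; rewrite labels_node mem_cat negb_or => /andP[H1 H2] /=.
rewrite islabE (negPf H1); congr DNode.
elim: ch IH H2 => //= c cs IHc IH /notin_flabels_cons [h1 h2].
rewrite (IH c) //; [|by left]. by rewrite IHc // => t Ht; apply: IH; right.
Qed.

Lemma repl_plug w C t : a \notin ctxlabels C -> repl w (plug C t) = plug C (repl w t).
Proof.
elim: C => //= d l C IH r; rewrite !mem_cat !negb_or => /and4P[h1 h2 h3 h4].
rewrite islabE (negPf h1) map_cat /= IH //; congr (DNode _ (_ ++ _ :: _)).
  elim: l h2 => //= c cs IHc /notin_flabels_cons [h5 h6]; by rewrite repl_nil // IHc.
elim: r h3 => //= c cs IHc /notin_flabels_cons [h5 h6]; by rewrite repl_nil // IHc.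
Qed.

Lemma condV_lab v : condV v -> exists s, v.1.1 = Some (a.+1, Spc s).
Proof. by case: v => [[[[l [|s]]|] n] L] //= /and3P[/eqP-> _ _]; exists s. Qed.

Lemma surgT_nil t : a.+1 \notin labels t -> surgT t = t.
Proof.
elim/dtree_ind2: t => d ch IH; rewrite labels_node mem_cat negb_or => /andP[H1 H2].
change ((if condV (info (DNode d ch)) then surgX (DNode d ch) else DNode d (map surgT ch)) = DNode d ch).
case: ifP => [Hc|_].
  have [s Ed] := condV_lab Hc; by move: H1 Ed => /= H1 Ed; move: H1; rewrite Ed /= inE eqxx.
congr DNode.
elim: ch IH H2 => //= c cs IHc IH /notin_flabels_cons [h1 h2].
rewrite (IH c) //; [|by left]. by rewrite IHc // => t Ht; apply: IH; right.
Qed.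

Lemma surgT_plug C t : a.+1 \notin ctxlabels C -> surgT (plug C t) = plug C (surgT t).
Proof.
elim: C => // d l C IH r; rewrite [ctxlabels _]/= !mem_cat !negb_or => /and4P[h1 h2 h3 h4].
change ((if condV (info (plug (Ctx d l C r) t)) then surgX (plug (Ctx d l C r) t) else DNode d (map surgT (l ++ plug C t :: r))) = plug (Ctx d l C r) (surgT t)).
case: ifP => [Hc|_].
  have [s Ed] := condV_lab Hc; by move: h1 Ed => /= h1 Ed; move: h1; rewrite Ed /= inE eqxx.
rewrite map_cat /= IH //; congr (DNode _ (_ ++ _ :: _)).
  elim: l h2 => //= c cs IHc /notin_flabels_cons [h5 h6]; by rewrite surgT_nil // IHc.
elim: r h3 => //= c cs IHc /notin_flabels_cons [h5 h6]; by rewrite surgT_nil // IHc.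
Qed.

Lemma surgT_cond t : condV (info t) -> surgT t = surgX t.
Proof. by case: t => d ch /= ->. Qed.

Lemma set_nth_mid (T : Type) (x0 : T) s1 y s2 z : set_nth x0 (s1 ++ y :: s2) (size s1) z = s1 ++ z :: s2.
Proof. by elim: s1 => //= x s1 ->. Qed.
Lemma nth_mid (T : Type) (x0 : T) s1 y s2 : nth x0 (s1 ++ y :: s2) (size s1) = y.
Proof. by elim: s1. Qed.

Lemma surgX_eq s xl C2 yl Tc yr xr :
  ~~ has (fun u => a \in labels u) xl -> a \notin ctxlabels C2 ->
  surgX (DNode (Some (a.+1, Spc s)) (xl ++ plug C2 (DNode (Some (a, Col (size yl).+1)) (yl ++ Tc :: yr)) :: xr))
  = DNode (Some (a.+1, Spc s)) (yl ++ plug C2 (DNode (Some (a, Col (size xl).+1)) (xl ++ Tc :: xr)) :: yr).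
Proof.
move=> h1 h2; rewrite /surgX find_cat (negPf h1) /=.
have -> : a \in labels (plug C2 (DNode (Some (a, Col (size yl).+1)) (yl ++ Tc :: yr))).
  by rewrite (perm_mem (labels_plug _ _)) mem_cat labels_node mem_cat /= mem_head orbT.
rewrite addn0 nth_mid findy_plug //= eqxx /= nth_mid set_nth_mid set_nth_mid repl_plug //=.
by rewrite eqxx.
Qed.

Lemma count_vinfo_plug (p : pred (deco * nat * seq nat)) C t :
  count p (vinfo (plug C t)) = count p (pathinfo C t) + (count p (sideinfo C) + count p (vinfo t)).
Proof. by rewrite (permP (vinfo_plug C t)) !count_cat. Qed.
Lemma count_labels_plug (p : pred nat) C t :
  count p (labels (plug C t)) = count p (ctxlabels C) + count p (labels t).
Proof. by rewrite (permP (labels_plug C t)) !count_cat. Qed.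

Lemma permPn (s1 s2 : seq nat) : (forall p : pred nat, count p s1 = count p s2) -> perm_eq s1 s2.
Proof. by move=> H; apply/permP => p; exact: H. Qed.
Lemma permPv (s1 s2 : seq (deco * nat * seq nat)) :
  (forall p : pred (deco * nat * seq nat), count p s1 = count p s2) -> perm_eq s1 s2.
Proof. by move=> H; apply/permP => p; exact: H. Qed.

Definition shape (pre : seq ctree) C1 d1 (l1 : seq ctree) C2 d2 (l2 : seq ctree) (T : ctree) (r2 r1 post : seq ctree) : cforest :=
  pre ++ plug C1 (DNode d1 (l1 ++ plug C2 (DNode d2 (l2 ++ T :: r2)) :: r1)) :: post.

Definition Lbig (pre : seq ctree) C1 (l1 : seq ctree) C2 (l2 : seq ctree) (T : ctree) (r2 r1 post : seq ctree) :=
  flabels pre ++ ctxlabels C1 ++ flabels post ++ flabels l1 ++ flabels r1 ++ ctxlabels C2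
  ++ flabels l2 ++ labels T ++ flabels r2.
Definition Vbig (pre : seq ctree) C1 (l1 : seq ctree) C2 (l2 : seq ctree) (T : ctree) (r2 r1 post : seq ctree) :=
  fverts pre ++ sideinfo C1 ++ fverts post ++ fverts l1 ++ fverts r1 ++ sideinfo C2
  ++ fverts l2 ++ vinfo T ++ fverts r2.

Lemma shape_labels pre C1 d1 l1 C2 d2 l2 T r2 r1 post :
  perm_eq (flabels (shape pre C1 d1 l1 C2 d2 l2 T r2 r1 post))
          (own d1 ++ own d2 ++ Lbig pre C1 l1 C2 l2 T r2 r1 post).
Proof.
apply: permPn => p; rewrite /shape /Lbig flabels_cat flabels_cons !count_cat count_labels_plug.
rewrite labels_node flabels_cat flabels_cons !count_cat count_labels_plug.
rewrite labels_node flabels_cat flabels_cons !count_cat; lia.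
Qed.

Lemma node_labels d1 l1 C2 d2 l2 T r2 r1 :
  perm_eq (labels (DNode d1 (l1 ++ plug C2 (DNode d2 (l2 ++ T :: r2)) :: r1)))
          (own d1 ++ own d2 ++ flabels l1 ++ flabels r1 ++ ctxlabels C2
            ++ flabels l2 ++ labels T ++ flabels r2).
Proof.
apply: permPn => p; rewrite labels_node flabels_cat flabels_cons !count_cat count_labels_plug.
rewrite labels_node flabels_cat flabels_cons !count_cat; lia.
Qed.

Lemma shape_verts (pre : seq ctree) C1 d1 (l1 : seq ctree) C2 d2 (l2 : seq ctree) (T : ctree)
  (r2 r1 post : seq ctree) :
  perm_eq (fverts (shape pre C1 d1 l1 C2 d2 l2 T r2 r1 post))
     (info (DNode d1 (l1 ++ plug C2 (DNode d2 (l2 ++ T :: r2)) :: r1)) ::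
      info (DNode d2 (l2 ++ T :: r2)) ::
      pathinfo C1 (DNode d1 (l1 ++ plug C2 (DNode d2 (l2 ++ T :: r2)) :: r1)) ++
      pathinfo C2 (DNode d2 (l2 ++ T :: r2)) ++ Vbig pre C1 l1 C2 l2 T r2 r1 post).
Proof.
apply: permPv => p; rewrite /shape /Vbig fverts_cat fverts_cons !count_cat count_vinfo_plug.
rewrite vinfo_node /= fverts_cat fverts_cons !count_cat count_vinfo_plug.
rewrite vinfo_node /= fverts_cat fverts_cons !count_cat /=; lia.
Qed.

Definition Sw (S : nat -> pred nat) : nat -> pred nat := fun d x => S d (tau x).

Lemma vok_L k S (v v' : deco * nat * seq nat) : v.1 = v'.1 ->
  (forall l c, v.1.1 = Some (l, c) -> proper_info l v.2 = proper_info l v'.2) ->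
  vertex_ok k S v -> vertex_ok k S v'.
Proof.
case: v => [[d n] L]; case: v' => [[d' n'] L'] /= [<- <-] H.
case: d H => [[l [i|j]]|] //= H [h1 [h2 h3]]; split => //; split => //.
by rewrite -(H l (Spc j)).
Qed.

Lemma tau_id x : x != a -> x != a.+1 -> tau x = x.
Proof. by rewrite /tau => /negPf-> /negPf->. Qed.

Lemma vok_other k S (v : deco * nat * seq nat) : vertex_ok k S v ->
  (forall l c, v.1.1 = Some (l, c) -> l != a /\ l != a.+1) -> vertex_ok k (Sw S) v.
Proof.
case: v => [[[[l c]|] n] L] //= [h1 [h2 h3]] H; split => //; split => //.
by have [e1 e2] := H l c erefl; rewrite /Sw tau_id.
Qed.

Lemma tau_a : tau a = a.+1. Proof. by rewrite /tau eqxx. Qed.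
Lemma tau_a1 : tau a.+1 = a. Proof. by rewrite /tau eqxx (gtn_eqF (ltnSn a)). Qed.
Lemma tau_lt x : x < a -> tau x = x.
Proof. by move=> h; apply: tau_id; apply/eqP; lia. Qed.
Lemma tau_gt x : a.+1 < x -> tau x = x.
Proof. by move=> h; apply: tau_id; apply/eqP; lia. Qed.

Lemma vok_swap k S v : vertex_ok k S v -> ~~ condV v -> vertex_ok k (Sw S) (swapI v).
Proof.
case: v => [[[[l c]|] n] L] //= [h1 [h2 h3]] hc; split => //; split; last by rewrite /Sw tauK.
case: c h2 hc => // j [/allPn [m hm hlt] hj] hc; split => //.
apply/allPn.
case: (eqVneq l a.+1) => [El|nl].
  subst l; move: hc; rewrite eqxx /=.
  case: (boolP (all (fun m => a <= m) L)) => [hall|/allPn [m' hm' hlt']].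
    have ham := allP hall m hm.
    have -> : a \in L by have -> : a = m by apply/eqP; rewrite eqn_leq ham; lia.
    by [].
  move=> _; exists (tau m'); first by rewrite map_f.
  rewrite tau_a1 tau_lt; lia.
case: (eqVneq l a) => [El|na].
  subst l; exists (tau m); first by rewrite map_f.
  rewrite tau_a tau_lt; lia.
exists (tau m); first by rewrite map_f.
rewrite (tau_id na nl) /tau; case: (eqVneq m a) => [Em|nm].
  subst m; apply/negP => H; move/eqP: nl; move/eqP: na; lia.
case: (eqVneq m a.+1) => [Em|nm1] //.
subst m; lia.
Qed.

Lemma vok_swap_cond k S v : vertex_ok k S v -> ~~ condV (swapI v).
Proof.
case: v => [[[[l [i|j]]|] n] L] //= [h1 [[/allPn [m hm hlt] hj] h3]].
apply/negP => /and3P [/eqP El ha hall].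
have El' : l = a by rewrite -(tauK l) El tau_a1.
subst l; have := allP hall (tau m) (map_f _ hm).
by rewrite tau_lt; lia.
Qed.

Lemma swapTK : involutive swapT.
Proof.
move=> t; elim/dtree_ind2: t => d ch IH /=.
have -> : swapd (swapd d) = d by case: d => [[l c]|] //=; rewrite tauK.
congr DNode; rewrite -map_comp.
elim: ch IH => //= c cs IHc IH; rewrite (IH c); last by left.
by rewrite IHc // => t Ht; apply: IH; right.
Qed.

Lemma vinfo_label t v x c : v \in vinfo t -> v.1.1 = Some (x, c) -> x \in labels t.
Proof.
move=> h1 h2; have := @fverts_label [:: t] v x c; rewrite /fverts /flabels /= !cats0.
by apply.
Qed.

Lemma sideinfo_label C v x c : v \in sideinfo C -> v.1.1 = Some (x, c) -> x \in ctxlabels C.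
Proof.
elim: C => //= d l C IH r; rewrite !mem_cat => /or3P[h|h|h] e.
- by rewrite (fverts_label h e) orbT.
- by rewrite (fverts_label h e) !orbT.
- by rewrite (IH h e) !orbT.
Qed.

Lemma Vbig_label pre C1 l1 C2 l2 T r2 r1 post v x c :
  v \in Vbig pre C1 l1 C2 l2 T r2 r1 post -> v.1.1 = Some (x, c) ->
  x \in Lbig pre C1 l1 C2 l2 T r2 r1 post.
Proof.
rewrite /Vbig /Lbig !mem_cat => H e.
case/orP: H => [h|]; first by rewrite (fverts_label h e).
case/orP => [h|]; first by rewrite (sideinfo_label h e) !orbT.
case/orP => [h|]; first by rewrite (fverts_label h e) !orbT.
case/orP => [h|]; first by rewrite (fverts_label h e) !orbT.
case/orP => [h|]; first by rewrite (fverts_label h e) !orbT.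
case/orP => [h|]; first by rewrite (sideinfo_label h e) !orbT.
case/orP => [h|]; first by rewrite (fverts_label h e) !orbT.
case/orP => [h|h]; first by rewrite (vinfo_label h e) !orbT.
by rewrite (fverts_label h e) !orbT.
Qed.

Lemma map_surgT_nil s : a.+1 \notin flabels s -> map surgT s = s.
Proof. by elim: s => //= t s IH /notin_flabels_cons [h1 h2]; rewrite surgT_nil // IH. Qed.

Lemma fverts_swap F : fverts (map swapT F) = map swapI (fverts F).
Proof.
elim: F => //= t F IH; rewrite !fverts_cons IH vinfo_swap map_cat //.
Qed.

Lemma flabels_swap F : flabels (map swapT F) = map tau (flabels F).
Proof.
elim: F => //= t F IH; rewrite !flabels_cons IH labels_swap map_cat //.
Qed.

Lemma count_deg_path C t t' i :
  count (fun v : deco * nat * seq nat => v.1.2 == i) (pathinfo C t) =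
  count (fun v : deco * nat * seq nat => v.1.2 == i) (pathinfo C t').
Proof.
have E s : count (fun v : deco * nat * seq nat => v.1.2 == i) s =
           count (fun p : deco * nat => p.2 == i) (map fst s) by rewrite count_map.
by rewrite !E (pathinfo_fst C t t').
Qed.

Lemma CF_uniq r k S F : CF r k S F -> uniq (flabels F).
Proof. by case=> _ [h _]; rewrite (perm_uniq h) iota_uniq. Qed.

Lemma tau_iota n : 1 <= a -> a < n -> perm_eq (map tau (iota 1 n)) (iota 1 n).
Proof.
move=> h1 h2; apply: uniq_perm.
- by rewrite (map_inj_uniq (inv_inj tauK)) iota_uniq.
- exact: iota_uniq.
move=> x; rewrite -{1}(tauK x) (mem_map (inv_inj tauK)) !mem_iota.
rewrite /tau; case: (eqVneq x a) => [->|n1]; first by lia.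
case: (eqVneq x a.+1) => [->|n2] //; lia.
Qed.

Lemma caseA r k S F : 1 <= a -> a < nint r -> CF r k S F -> ~~ has condV (fverts F) ->
  CF r k (Sw S) (map swapT F) /\ ~~ has condV (fverts (map swapT F)).
Proof.
move=> h1 h2 [ht [hl hv]] hc; rewrite fverts_swap; split; last first.
  apply/hasPn => v' /mapP [v hv' ->]; exact: vok_swap_cond (hv v hv').
split.
  move=> i; rewrite -ht fverts_swap count_map; apply: eq_count => -[[d n] L] //.
split.
  rewrite flabels_swap; apply: perm_trans (tau_iota h1 h2); exact: perm_map.
rewrite fverts_swap => v' /mapP [v hv' ->]; apply: vok_swap (hv v hv') _.
by move/hasPn: hc; apply.
Qed.

Lemma decompB r k S F : CF r k S F -> has condV (fverts F) ->
  exists pre C1 s xl C2 yl Tc yr xr post,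
    F = shape pre C1 (Some (a.+1, Spc s)) xl C2 (Some (a, Col (size yl).+1)) yl Tc yr xr post
    /\ all (fun m => a <= m) (labels (DNode (Some (a.+1, Spc s))
          (xl ++ plug C2 (DNode (Some (a, Col (size yl).+1)) (yl ++ Tc :: yr)) :: xr))).
Proof.
move=> [ht [hl hv]] /hasP [v hvF hcv].
have [pre [C1 [u [post [EF Ev]]]]] := fverts_dec hvF.
subst v; clear hvF; case: u EF hcv => dx xs EF hcv.
have [s /= Edx] := condV_lab hcv; subst dx.
have hall0 : all (fun m => a <= m) (labels (DNode (Some (a.+1, Spc s)) xs)) by case/and3P: hcv.
move: hcv => /= /and3P [_ haL hall]; clear hall.
have haL' : a \in flabels xs.
  by move: haL; rewrite in_cons (ltn_eqF (ltnSn a)).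
have [xl [C2 [c0 [ys [xr Exs]]]]] := flabels_dec haL'; subst xs.
set y := DNode (Some (a, c0)) ys.
have hsub : {subset labels y <= labels (DNode (Some (a.+1, Spc s)) (xl ++ plug C2 y :: xr))}.
  move=> m hm; rewrite labels_node mem_cat flabels_cat flabels_cons !mem_cat.
  by rewrite (perm_mem (labels_plug _ _)) mem_cat hm !orbT.
have hy := hv (info y).
have hyin : info y \in fverts F.
  rewrite EF fverts_cat fverts_cons !mem_cat (perm_mem (vinfo_plug _ _)) !mem_cat vinfo_node.
  rewrite in_cons fverts_cat fverts_cons !mem_cat (perm_mem (vinfo_plug _ _)) !mem_cat.
  by rewrite vinfo_node in_cons eqxx !orbT.
clear haL haL'; move: (hy hyin); rewrite /y /= /proper_info; clear hy hyin; case: c0 @y EF hsub hall0 => [c|j] y EF hsub hall; last first.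
  case=> _ [[hnp _] _]; exfalso; apply: (negP hnp).
  change (all (fun m => a <= m) (labels y)); apply/allP => m hm; exact: (allP hall) m (hsub m hm).
case=> hpos [/andP [hc1 hc2] hS].
exists pre, C1, s, xl, C2, (take c.-1 ys), (nth leaf ys c.-1), (drop c ys), xr, post.
have Hlt : c.-1 < size ys by rewrite prednK.
have Eys : ys = take c.-1 ys ++ nth leaf ys c.-1 :: drop c ys.
  by rewrite -[in drop c ys](prednK hc1) -(drop_nth leaf Hlt) cat_take_drop.
have Ec : (size (take c.-1 ys)).+1 = c by rewrite size_takel ?(ltnW Hlt) // prednK.
rewrite Ec -Eys; split => //; by rewrite EF /shape -Eys.
Qed.

Lemma has_labels x (s : seq ctree) : has (fun u => x \in labels u) s = (x \in flabels s).
Proof. by elim: s => //= t s ->; rewrite flabels_cons mem_cat. Qed.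

Lemma Phi_shape pre C1 s xl C2 yl Tc yr xr post :
  a.+1 \notin flabels pre -> a.+1 \notin ctxlabels C1 -> a.+1 \notin flabels post ->
  a \notin flabels xl -> a \notin ctxlabels C2 ->
  all (fun m => a <= m) (labels (DNode (Some (a.+1, Spc s))
          (xl ++ plug C2 (DNode (Some (a, Col (size yl).+1)) (yl ++ Tc :: yr)) :: xr))) ->
  Phi (shape pre C1 (Some (a.+1, Spc s)) xl C2 (Some (a, Col (size yl).+1)) yl Tc yr xr post)
  = shape pre C1 (Some (a.+1, Spc s)) yl C2 (Some (a, Col (size xl).+1)) xl Tc xr yr post.
Proof.
move=> h1 h2 h3 h4 h5 hall.
pose X := DNode (Some (a.+1, Spc s)) (xl ++ plug C2 (DNode (Some (a, Col (size yl).+1)) (yl ++ Tc :: yr)) :: xr).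
have hc : condV (info X).
  change [&& a.+1 == a.+1, a \in labels X & all (fun m => a <= m) (labels X)].
  rewrite eqxx hall andbT /X.
  by rewrite (perm_mem (node_labels _ _ _ _ _ _ _ _)) /= !inE eqxx orbT.
rewrite /Phi.
have -> : has condV (fverts (shape pre C1 (Some (a.+1, Spc s)) xl C2
            (Some (a, Col (size yl).+1)) yl Tc yr xr post)).
  by apply/hasP; exists (info X) => //; rewrite (perm_mem (shape_verts _ _ _ _ _ _ _ _ _ _ _)) mem_head.
rewrite /shape map_cat /= map_surgT_nil // map_surgT_nil // surgT_plug // surgT_cond //.
by rewrite surgX_eq // has_labels.
Qed.

Lemma notin_cons_uniq (x y : nat) s : uniq (x :: y :: s) -> [/\ x \notin s, y \notin s & uniq s].
Proof. by rewrite /= inE negb_or => /andP [/andP [_ h1] /andP [h2 h3]]. Qed.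


Lemma count_cons (T : Type) (p : pred T) x s : count p (x :: s) = p x + count p s.
Proof. by []. Qed.

Ltac gen_counts := repeat match goal with
  | |- context [count ?p ?s] => let n := fresh "n" in set n := count p s; clearbody n
  | |- context [nat_of_bool ?b] => let n := fresh "n" in set n := nat_of_bool b; clearbody n
  end.
Lemma shapeB r k S pre C1 s xl C2 yl Tc yr xr post :
  1 <= a -> a < nint r ->
  CF r k S (shape pre C1 (Some (a.+1, Spc s)) xl C2 (Some (a, Col (size yl).+1)) yl Tc yr xr post) ->
  all (fun m => a <= m) (labels (DNode (Some (a.+1, Spc s))
          (xl ++ plug C2 (DNode (Some (a, Col (size yl).+1)) (yl ++ Tc :: yr)) :: xr))) ->
  CF r k (Sw S) (shape pre C1 (Some (a.+1, Spc s)) yl C2 (Some (a, Col (size xl).+1)) xl Tc xr yr post)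
  /\ Phi (shape pre C1 (Some (a.+1, Spc s)) xl C2 (Some (a, Col (size yl).+1)) yl Tc yr xr post)
     = shape pre C1 (Some (a.+1, Spc s)) yl C2 (Some (a, Col (size xl).+1)) xl Tc xr yr post
  /\ Phi (shape pre C1 (Some (a.+1, Spc s)) yl C2 (Some (a, Col (size xl).+1)) xl Tc xr yr post)
     = shape pre C1 (Some (a.+1, Spc s)) xl C2 (Some (a, Col (size yl).+1)) yl Tc yr xr post.
Proof.
move=> ha1 ha2 hCF hall.
set F := shape pre C1 _ xl C2 _ yl Tc yr xr post.
set F' := shape pre C1 _ yl C2 _ xl Tc xr yr post.
pose X := DNode (Some (a.+1, Spc s)) (xl ++ plug C2 (DNode (Some (a, Col (size yl).+1)) (yl ++ Tc :: yr)) :: xr).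
pose Y := DNode (Some (a, Col (size yl).+1)) (yl ++ Tc :: yr).
pose X' := DNode (Some (a.+1, Spc s)) (yl ++ plug C2 (DNode (Some (a, Col (size xl).+1)) (xl ++ Tc :: xr)) :: yr).
pose W := DNode (Some (a, Col (size xl).+1)) (xl ++ Tc :: xr).
pose LB := Lbig pre C1 xl C2 yl Tc yr xr post.
pose LB' := Lbig pre C1 yl C2 xl Tc xr yr post.
pose VB := Vbig pre C1 xl C2 yl Tc yr xr post.
pose VB' := Vbig pre C1 yl C2 xl Tc xr yr post.
have hU := CF_uniq hCF.
have hFL : perm_eq (flabels F) (a.+1 :: a :: LB) := shape_labels _ _ _ _ _ _ _ _ _ _ _.
have hFL' : perm_eq (flabels F') (a.+1 :: a :: LB').
  apply: perm_trans (shape_labels _ _ _ _ _ _ _ _ _ _ _) _; rewrite /= !perm_cons.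
  by apply: permPn => p; rewrite /LB' /Lbig !count_cat; clear -p; lia.
have hLL : perm_eq LB' LB by apply: permPn => p; rewrite /LB /LB' /Lbig !count_cat; clear -p; lia.
have [na1 na hUL] : [/\ a.+1 \notin LB, a \notin LB & uniq LB].
  by apply: notin_cons_uniq; rewrite -(perm_uniq hFL).
have nb1 := na1; have nb := na.
move: na1 na; rewrite /LB /Lbig !mem_cat !negb_or.
case/andP => p1 /andP [p2 /andP [p3 /andP [p4 /andP [p5 /andP [p6 /andP [p7 /andP [p8 p9]]]]]]].
case/andP => q1 /andP [q2 /andP [q3 /andP [q4 /andP [q5 /andP [q6 /andP [q7 /andP [q8 q9]]]]]]].
have hXX : perm_eq (labels X) (labels X').
  apply: perm_trans (node_labels _ _ _ _ _ _ _ _) _; rewrite perm_sym.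
  apply: perm_trans (node_labels _ _ _ _ _ _ _ _) _.
  apply: permPn => p; rewrite /own !count_cat. clear -p. lia.
have hall' : all (fun m => a <= m) (labels X') by rewrite -(perm_all _ hXX).
have E1 : Phi F = F' by apply: Phi_shape.
have E2 : Phi F' = F by apply: Phi_shape.
split; last by split.
have hFV := shape_verts pre C1 (Some (a.+1, Spc s)) xl C2 (Some (a, Col (size yl).+1)) yl Tc yr xr post.
have hFV' := shape_verts pre C1 (Some (a.+1, Spc s)) yl C2 (Some (a, Col (size xl).+1)) xl Tc xr yr post.
fold F X Y VB in hFV; fold F' X' W VB' in hFV'.
case: hCF => [ht [hl hv]].
have inF v : v \in info X :: info Y :: pathinfo C1 X ++ pathinfo C2 Y ++ VB -> vertex_ok k S v.
  by move=> h; apply: hv; rewrite (perm_mem hFV).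
split.
  move=> i; rewrite -ht (permP hFV) (permP hFV') !count_cons !count_cat.
  rewrite (count_deg_path C1 X' X) (count_deg_path C2 W Y).
  rewrite /info /= !size_cat /= /X /Y. clear -i; gen_counts; lia.
split.
  rewrite (permPl hFL'); rewrite (permPl hFL) in hl; by rewrite -(permPr hl) !perm_cons.
move=> v; rewrite (perm_mem hFV') !in_cons !mem_cat.
have okX : vertex_ok k S (info X) by apply: inF; rewrite mem_head.
have okY : vertex_ok k S (info Y) by apply: inF; rewrite !inE eqxx orbT.
move=> /orP [/eqP -> | /orP [/eqP -> | /orP [hp | /orP [hp | hp]]]].
- have haX' : a \in labels X'.
    rewrite (perm_mem (node_labels _ _ _ _ _ _ _ _)) /own.
    by rewrite mem_cat mem_cat mem_head orbT.
  have [_ [[_ hs] _]] := okX.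
  have [_ [_ hS]] := okY.
  change (0 < size (yl ++ plug C2 W :: yr) /\ ((~~ proper_info a.+1 (labels X') /\ 0 < s <= k)
     /\ Sw S (size (yl ++ plug C2 W :: yr)) a.+1)).
  split; first by rewrite size_cat addnS.
  split; last by move: hS; rewrite /Y /chof /Sw tau_a1 !size_cat.
  split => //; apply/allPn; exists a => //; by rewrite -ltnNge.
- have [_ [_ hS]] := okX.
  change (0 < size (xl ++ Tc :: xr) /\ ((0 < (size xl).+1 <= size (xl ++ Tc :: xr)))
     /\ Sw S (size (xl ++ Tc :: xr)) a).
  split; first by rewrite size_cat addnS.
  split; last by move: hS; rewrite /X /chof /Sw tau_a !size_cat.
  by rewrite size_cat /= addnS ltnS leq_addr.
- have [v0 hv0 [e1 e2]] := pathinfo_perm X hp.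
  have ok0 : vertex_ok k S v0 by apply: inF; rewrite !in_cons !mem_cat hv0 !orbT.
  apply: (vok_L e1 _ (vok_other ok0 _)).
    by move=> l c _; rewrite /proper_info (perm_all _ (e2 hXX)).
  move=> l c el; have hl0 : l \in ctxlabels C1 by apply: (pathinfo_own hv0); rewrite el mem_head.
  by split; apply/negP => /eqP El; subst l; [move: q2 | move: p2]; rewrite hl0.
- have [v0 hv0 [e1 _]] := pathinfo_perm Y hp.
  have ok0 : vertex_ok k S v0 by apply: inF; rewrite !in_cons !mem_cat hv0 !orbT.
  have hl0 l c : v0.1.1 = Some (l, c) -> l \in ctxlabels C2.
    by move=> el; apply: (pathinfo_own hv0); rewrite el mem_head.
  have hneq l c : v0.1.1 = Some (l, c) -> l != a /\ l != a.+1.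
    by move=> el; split; apply/negP => /eqP El; subst l; [move: q6 | move: p6]; rewrite (hl0 _ c el).
  have hlt l c : v0.1.1 = Some (l, c) -> a < l.
    move=> el; have [n1 _] := hneq l c el.
    have hlX : l \in labels X.
      by rewrite (perm_mem (node_labels _ _ _ _ _ _ _ _)) !mem_cat (hl0 _ c el) !orbT.
    by have := allP hall l hlX; rewrite leq_eqVlt eq_sym (negPf n1).
  have haY : a \in v0.2.
    by apply: (pathinfo_sub hv0); rewrite /Y labels_node mem_cat /= mem_head.
  have haW : a \in v.2.
    by apply: (pathinfo_sub hp); rewrite labels_node mem_cat /= mem_head.
  have okv : vertex_ok k S v.
    apply: (vok_L e1 _ ok0) => l c el.
    have h := hlt l c el.
    have -> : proper_info l v0.2 = false by apply/negP => /allP /(_ a haY); rewrite leqNgt h.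
    by apply/esym/negP => /allP /(_ a haW); rewrite leqNgt h.
  apply: vok_other okv _ => l c el; apply: (hneq l c); by rewrite e1.
- have hVV : perm_eq VB' VB.
    by apply: permPv => p; rewrite /VB /VB' /Vbig !count_cat; clear -p; gen_counts; lia.
  have hp0 : v \in VB by rewrite -(perm_mem hVV) /VB' /Vbig !mem_cat.
  have ok0 : vertex_ok k S v.
    apply: inF; rewrite in_cons; apply/orP; right; rewrite in_cons; apply/orP; right.
    rewrite mem_cat; apply/orP; right; rewrite mem_cat; apply/orP; right; exact: hp0.
  apply: vok_other ok0 _ => l c el; have hl1 := Vbig_label hp0 el.
  by split; apply/negP => /eqP El; subst l; [move: nb | move: nb1]; rewrite hl1.
Qed.

Lemma Phi_ok r k S F : 1 <= a -> a < nint r -> CF r k S F -> CF r k (Sw S) (Phi F) /\ Phi (Phi F) = F.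
Proof.
move=> h1 h2 hF; case: (boolP (has condV (fverts F))) => hc.
  have [pre [C1 [s [xl [C2 [yl [Tc [yr [xr [post [EF hall]]]]]]]]]]] := decompB hF hc.
  subst F; have [h3 [h4 h5]] := shapeB h1 h2 hF hall; by rewrite h4.
have [h3 h4] := caseA h1 h2 hF hc.
rewrite /Phi (negPf hc) (negPf h4); split => //.
by rewrite -map_comp (eq_map swapTK) map_id.
Qed.
End Ops.

Lemma CF_ext r k S S' F : (forall d x, 0 < d -> S d x = S' d x) -> CF r k S F -> CF r k S' F.
Proof.
move=> hS [ht [hl hv]]; split => //; split => // v hvF.
have := hv v hvF; case: v hvF => [[[[l c]|] n] L] //= _ [h1 [h2 h3]].
by split => //; split => //; rewrite -hS.
Qed.

Local Open Scope classical_set_scope.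
Local Open Scope card_scope.

Lemma swap_le r k S a : 1 <= a -> a < nint r ->
  [set F | CF r k S F] #<= [set F | CF r k (Sw a S) F].
Proof.
move=> h1 h2.
have : $|{injfun [set F | CF r k S F] >-> [set F | CF r k (Sw a S) F]}|.
  apply/injfunPex; exists (Phi a).
    by move=> F /= hF; have [] := Phi_ok h1 h2 hF.
  move=> F1 F2; rewrite !inE /= => hF1 hF2 E.
  by rewrite -(Phi_ok h1 h2 hF1).2 E (Phi_ok h1 h2 hF2).2.
by case=> f; exact: inj_card_le f.
Qed.

Lemma swap_eq r k S a : 1 <= a -> a < nint r ->
  [set F | CF r k S F] #= [set F | CF r k (Sw a S) F].
Proof.
move=> h1 h2; apply/card_eqPle; split; first exact: swap_le.
have -> : [set F | CF r k S F] = [set F | CF r k (Sw a (Sw a S)) F].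
  by apply/seteqP; split => F /= h; apply: CF_ext h => d x _; rewrite /Sw tauK.
exact: swap_le.
Qed.

Definition Sword (w : seq nat) : nat -> pred nat :=
  fun d x => (1 <= x <= size w) && (nth 0 w x.-1 == d).
Definition tswap (i : nat) (s : seq nat) :=
  set_nth 0 (set_nth 0 s i (nth 0 s i.+1)) i.+1 (nth 0 s i).

Lemma size_tswap i s : i.+1 < size s -> size (tswap i s) = size s.
Proof. by move=> h; rewrite /tswap !size_set_nth; lia. Qed.

Lemma Sword_swap w i d x : i.+1 < size w -> Sword (tswap i w) d x = Sw i.+1 (Sword w) d x.
Proof.
move=> h; rewrite /Sword /Sw size_tswap // /tswap !nth_set_nth /= /tau.
case: (eqVneq x i.+1) => [->|h1] /=.
  by rewrite (ltn_eqF (ltnSn i)) nth_set_nth /= eqxx h (ltnW h).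
case: (eqVneq x i.+2) => [->|h2] /=.
  by rewrite eqxx h (ltnW h).
have -> : (x.-1 == i.+1) = false by apply/eqP; move/eqP: h2; lia.
rewrite nth_set_nth /=.
case: (eqVneq x.-1 i) => [h3|h3] //.
have -> : x = 0 by move/eqP: h1; lia.
by [].
Qed.

Inductive adj_rt : seq nat -> seq nat -> Prop :=
| rt0 s : adj_rt s s
| rtS i s t : i.+1 < size s -> adj_rt (tswap i s) t -> adj_rt s t.

Lemma rt_trans s t u : adj_rt s t -> adj_rt t u -> adj_rt s u.
Proof. by elim=> // i s' t' h _ IH /IH; apply: rtS. Qed.

Lemma rt_cons x s t : adj_rt s t -> adj_rt (x :: s) (x :: t).
Proof. by elim=> [s'|i s' t' h _ IH]; [exact: rt0 | apply: (@rtS i.+1)]. Qed.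

Lemma rt_move x u v : adj_rt (x :: u ++ v) (u ++ x :: v).
Proof.
elim: u => [|y u IH] /=; first exact: rt0.
apply: (@rtS 0) => //=; exact: rt_cons.
Qed.

Lemma perm_rt s t : perm_eq s t -> adj_rt s t.
Proof.
elim: s t => [|x s IH] t.
  by move=> /perm_size; case: t => // _; exact: rt0.
move=> hp; have hx : x \in t by rewrite -(perm_mem hp) mem_head.
case: (splitPr hx) hp => u v hp.
apply: rt_trans (rt_move x u v); apply: rt_cons; apply: IH.
by rewrite -(perm_cons x); apply: perm_trans hp _; rewrite -cat1s perm_catCA.
Qed.

Lemma rt_card r k s t : adj_rt s t -> size s = nint r ->
  [set F | CF r k (Sword s) F] #= [set F | CF r k (Sword t) F].
Proof.
elim=> [s'|i s' t' h _ IH] hs; first exact: card_eqxx.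
apply: card_eq_trans (swap_eq k (Sword s') (a:=i.+1) _ _) _ => //; first by rewrite -hs.
have -> : [set F | CF r k (Sw i.+1 (Sword s')) F] = [set F | CF r k (Sword (tswap i s')) F].
  by apply/seteqP; split => F /= hF; apply: CF_ext hF => d x _; rewrite Sword_swap.
by apply: IH; rewrite size_tswap.
Qed.

Lemma seq_choice (P : nat -> nat -> Prop) (s : seq nat) :
  (forall x, x \in s -> exists i, P x i) ->
  exists w, size w = size s /\ forall j, j < size s -> P (nth 0 s j) (nth 0 w j).
Proof.
elim: s => [|x s IH] H; first by exists [::].
have [i hi] := H x (mem_head _ _).
have [w [hw hP]] := IH (fun y hy => H y ltac:(by rewrite in_cons hy orbT)).
exists (i :: w); split; first by rewrite /= hw.
by case=> [|j] hj //=; apply: hP.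
Qed.

Lemma inV_word r S : inV r S -> exists w, [/\ size w = nint r,
  forall d x, 0 < d -> S d x = Sword w d x &
  forall d, count_mem d w = (if d == 0 then 0 else nth 0 r d)].
Proof.
move=> [hdis [hcov hcnt]].
have [w [hw hP]] := @seq_choice (fun x i => 1 <= i /\ S i x) (iota 1 (nint r))
  (fun x hx => let: ex_intro2 i hi hS := (hcov x).2 ltac:(rewrite mem_iota in hx; lia) in
               ex_intro _ i (conj hi hS)).
rewrite size_iota in hw hP.
have key x : 1 <= x <= nint r -> 1 <= nth 0 w x.-1 /\ S (nth 0 w x.-1) x.
  move=> hx; have := hP x.-1 ltac:(lia); rewrite nth_iota; last by lia.
  by have -> : 1 + x.-1 = x by lia.
have hSw d x : 0 < d -> S d x = Sword w d x.
  move=> hd; rewrite /Sword hw.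
  case: (boolP (1 <= x <= nint r)) => hx /=.
    have [h1 h2] := key x hx.
    case: (eqVneq (nth 0 w x.-1) d) => [<-|hne]; first by rewrite h2.
    apply/negbTE; have := hdis d (nth 0 w x.-1) x hd h1; rewrite eq_sym hne h2 andbT.
    by apply.
  by apply/negP => hS; move: hx; rewrite ((hcov x).1 (ex_intro2 _ _ d hd hS)).
exists w; split => // d.
have w_eq : w = map (fun x => nth 0 w x.-1) (iota 1 (nint r)).
  have := iotaDl 1 0 (nint r); rewrite addn0 => ->.
  rewrite -map_comp -{1}(mkseq_nth 0 w) /mkseq hw; apply: eq_map => j /=; by rewrite add0n.
rewrite {1}w_eq count_map.
case: (eqVneq d 0) => [->|hd].
  rewrite -[RHS](count_pred0 (iota 1 (nint r))); apply: eq_in_count => x; rewrite mem_iota => hx /=.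
  by have [h1 _] := key x ltac:(lia); apply/eqP; lia.
rewrite -hcnt; last by lia.
apply: eq_in_count => x; rewrite mem_iota => hx /=.
by rewrite hSw; [rewrite /Sword hw; have -> : 1 <= x <= nint r by lia | lia].
Qed.

Theorem lemma3p4 (r : seq nat) (k : nat) (S1 S2 : nat -> pred nat) :
  inV r S1 -> inV r S2 ->
  [set F | CF r k S1 F] #= [set F | CF r k S2 F].
Proof.
move=> h1 h2.
have [w1 [hs1 hS1 hc1]] := inV_word h1; have [w2 [hs2 hS2 hc2]] := inV_word h2.
have -> : [set F | CF r k S1 F] = [set F | CF r k (Sword w1) F].
  by apply/seteqP; split => F /= hF; apply: CF_ext hF => d x hd; rewrite hS1.
have -> : [set F | CF r k S2 F] = [set F | CF r k (Sword w2) F].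
  by apply/seteqP; split => F /= hF; apply: CF_ext hF => d x hd; rewrite hS2.
apply: rt_card hs1; apply: perm_rt.
by apply/allP => x _; rewrite /= hc1 hc2.
Qed.
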